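(* Let $\Gamma=(N,A,u)$ be a finite normal form game. The following are equivalent: (i) there exists a game $\Gamma'$, in which all players have the same strategy set, that is fully symmetric in the label-dependent sense and satisfies $\Gamma\cong\Gamma'$; (ii) $\operatorname{Aut}(\Gamma)$ has a player $n$-transitive and strategy trivial subgroup $G$; (iii) there exists a matching $M$ of $A_1,\dots,A_n$ such that $M_{S_N}\le\operatorname{Aut}(\Gamma)$.
   Context: A game bijection $g=(\pi;(\tau_i)_{i\in N})$ from $(N,A,u)$ to $(M',B,v)$ consists of a bijection $\pi:N\to M'$ and bijections $\tau_i:A_i\to B_{\pi(i)}$; write $g(i)=\pi(i)$, $g(s_i)=\tau_i(s_i)$, $g(s)=(\tau_{\pi^{-1}(j)}(s_{\pi^{-1}(j)}))_{j}$; composition is $(\eta;(\phi_j))\circ(\pi;(\tau_i))=(\eta\circ\pi;(\phi_{\pi(i)}\circ\tau_i)_i)$. It is an isomorphism if $u_i(s)=v_{g(i)}(g(s))$ for all $i,s$; $\Gamma\cong\Gamma'$ means an isomorphism exists; $\operatorname{Aut}(\Gamma)$ is the group of isomorphisms from $\Gamma$ to itself. A subgroup $G$ is player $n$-transitive if the set of player permutations of its elements is all of $S_N$, and strategy trivial if for each $i\in N$, $g(s_i)=s_i$ for all $g\in G$ with $g(i)=i$ and all $s_i\in A_i$. Label-dependent fully symmetric: all players share a strategy set $X$ and $u_i(s)=u_{\pi(i)}(\pi(s))$ for all $i\in N$, $\pi\in S_N$, $s\in A$, where $\pi(s)=(s_{\pi^{-1}(i)})_{i\in N}$. A matching of $A_1,\dots,A_n$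 is $M\subseteq\times_iA_i$ such that for each $i$ and $a_i\in A_i$ exactly one $s\in M$ has $s_i=a_i$; $M_{ij}:A_i\to A_j$ sends $a_i$ to the unique $a_j$ with some $s\in M$ having $s_i=a_i$, $s_j=a_j$; $M_\pi=(\pi;(M_{i\pi(i)})_{i\in N})$, $M_{S_N}=\{M_\pi:\pi\in S_N\}$. *)

(* Defs.v *)
(* payoffs are Stdlib reals (only compared by equality). *)
From HB Require Import structures.
From mathcomp Require Import all_boot all_fingroup.
From Stdlib Require Rdefinitions.
Set Implicit Arguments. Unset Strict Implicit. Unset Printing Implicit Defensive.

Record game := Game {
  player : finType;
  strat : player -> finType;
  payoff : player -> (forall i : player, strat i) -> Rdefinitions.R }.

Arguments strat : clear implicits.
Arguments payoff : clear implicits.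

Definition profile (G : game) := forall i : player G, strat G i.

Record gbij (G H : game) := GBij {
  gpl : player G -> player H;
  gst : forall i : player G, strat G i -> strat H (gpl i) }.

Arguments gpl {G H} g _.
Arguments gst {G H} g i _.

Definition is_gbij (G H : game) (g : gbij G H) :=
  bijective (gpl g) /\ forall i, bijective (gst g i).

Definition gprof (G H : game) (g : gbij G H) (s : profile G) (t : profile H) :=
  forall k, t (gpl g k) = gst g k (s k).

Definition is_iso (G H : game) (g : gbij G H) :=
  is_gbij g /\
  forall i (s : profile G) (t : profile H),
    gprof g s t -> payoff G i s = payoff H (gpl g i) t.

Definition isomorphic (G H : game) := exists g : gbij G H, is_iso g.

Definition gid (G : game) : gbij G G :=
  @GBij G G (fun i => i) (fun i a => a).

Definition gcomp (G H K : game) (f : gbij H K) (g : gbij G H) : gbij G K :=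
  @GBij G K (fun i => gpl f (gpl g i)) (fun i a => gst f (gpl g i) (gst g i a)).

Definition aut_subgroup (G : game) (S : gbij G G -> Prop) :=
  (forall g, S g -> is_iso g) /\
  S (gid G) /\
  (forall f g, S f -> S g -> S (gcomp f g)) /\
  (forall g, S g -> exists h, S h /\ gcomp h g = gid G /\ gcomp g h = gid G).

Definition player_transitive (G : game) (S : gbij G G -> Prop) :=
  forall p : {perm player G}, exists g, S g /\ forall i, gpl g i = p i.

(** strategy trivial: g(i) = i implies g(s_i) = s_i (compared in the
    disjoint union of strategy sets, since the types differ only up to the
    propositional equality g(i) = i). *)
Definition strategy_trivial (G : game) (S : gbij G G -> Prop) :=
  forall (g : gbij G G) (i : player G), S g -> gpl g i = i ->
    forall a : strat G i,
      existT (fun j => strat G j : Type) (gpl g i) (gst g i a)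
      = existT (fun j => strat G j : Type) i a.

Definition sym_game (M : finType) (X : finType) (v : M -> (M -> X) -> Rdefinitions.R)
  : game := @Game M (fun _ => X) v.

Definition ld_fully_symmetric (M : finType) (X : finType)
    (v : M -> (M -> X) -> Rdefinitions.R) :=
  forall (i : M) (p : {perm M}) (s : M -> X),
    v i s = v (p i) (fun j => s ((p^-1)%g j)).

Definition matching (G : game) (M : profile G -> Prop) :=
  forall (i : player G) (a : strat G i), exists! s : profile G, M s /\ s i = a.

Definition Mrel (G : game) (M : profile G -> Prop) (i j : player G)
    (a : strat G i) (b : strat G j) :=
  exists s : profile G, M s /\ s i = a /\ s j = b.

Definition is_Mperm (G : game) (M : profile G -> Prop) (p : {perm player G})
    (g : gbij G G) :=
  (forall i, gpl g i = p i) /\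
  forall i (a : strat G i), @Mrel G M i (gpl g i) a (gst g i a).

(* Main.v *)
Require Import Defs.
From mathcomp Require Import all_boot all_fingroup.
From Stdlib Require Rdefinitions.
From Stdlib Require Import Eqdep ClassicalEpsilon FunctionalExtensionality.
Set Implicit Arguments. Unset Strict Implicit. Unset Printing Implicit Defensive.

Definition tmap (G : game) (g : gbij G G) (x : {j : player G & (strat G j : Type)})
  : {j : player G & (strat G j : Type)} :=
  existT (fun j => strat G j : Type) (gpl g (projT1 x)) (gst g (projT1 x) (projT2 x)).

Lemma tmap_comp (G : game) (f g : gbij G G) x : tmap (gcomp f g) x = tmap f (tmap g x).
Proof. by case: x. Qed.

Lemma tmap_id (G : game) x : tmap (gid G) x = x.
Proof. by case: x. Qed.

Lemma gbij_ext (G H : game) (g1 g2 : gbij G H) :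
  (forall i, gpl g1 i = gpl g2 i) ->
  (forall i a, existT (fun j => strat H j : Type) (gpl g1 i) (gst g1 i a)
             = existT (fun j => strat H j : Type) (gpl g2 i) (gst g2 i a)) -> g1 = g2.
Proof.
case: g1 g2 => [p1 s1] [p2 s2] /= Hp Hs.
have E : p1 = p2 by apply: functional_extensionality.
subst p2; f_equal.
apply: functional_extensionality_dep => i; apply: functional_extensionality => a.
exact: inj_pair2 (Hs i a).
Qed.

Lemma Mrel_fun (G : game) (M : profile G -> Prop) (hM : matching M) i j a b s :
  @Mrel _ M i j a b -> M s -> s i = a -> s j = b.
Proof.
case=> s' [Ms' [e1 e2]] Ms e.
have [s0 [_ U]] := hM i a.
have E1 := U s (conj Ms e). have E2 := U s' (conj Ms' e1).
by rewrite -E1 E2.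
Qed.

Lemma Mperm_uniq (G : game) (M : profile G -> Prop) (hM : matching M) p g1 g2 :
  is_Mperm M p g1 -> is_Mperm M p g2 -> g1 = g2.
Proof.
case=> Hp1 Hr1 [Hp2 Hr2]; apply: gbij_ext => [i|i a]; first by rewrite Hp1 Hp2.
have [s [Ms [e1 e2]]] := Hr1 i a.
have e3 := Mrel_fun hM (Hr2 i a) Ms e1.
rewrite -e2 -e3 Hp1 Hp2 //.
Qed.

Lemma Mperm_comp (G : game) (M : profile G -> Prop) (hM : matching M) p q f g :
  is_Mperm M p f -> is_Mperm M q g -> is_Mperm M (q * p)%g (gcomp f g).
Proof.
case=> Hpf Hrf [Hpg Hrg]; split=> [i|i a] /=; first by rewrite permM Hpg Hpf.
have [s [Ms [e1 e2]]] := Hrg i a.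
have e3 := Mrel_fun hM (Hrf _ (gst g i a)) Ms e2.
by exists s.
Qed.

Lemma Mperm_id (G : game) (M : profile G -> Prop) (hM : matching M) :
  is_Mperm M 1%g (gid G).
Proof.
split=> [i|i a] /=; first by rewrite perm1.
have [s [[Ms e] _]] := hM i a. by exists s.
Qed.

Lemma Mperm_fix (G : game) (M : profile G -> Prop) p g i a :
  is_Mperm M p g -> gpl g i = i ->
  existT (fun j => strat G j : Type) (gpl g i) (gst g i a)
  = existT (fun j => strat G j : Type) i a.
Proof.
case=> _ Hr E. have [s [Ms [e1 e2]]] := Hr i a.
by rewrite -e2 E e1.
Qed.

Lemma iii_ii (G : game) :
  (exists M : profile G -> Prop,
       matching M /\
       forall p : {perm player G}, exists g : gbij G G, is_Mperm M p g /\ is_iso g) ->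
  (exists S : gbij G G -> Prop,
       aut_subgroup S /\ player_transitive S /\ strategy_trivial S).
Proof.
case=> M [hM H].
exists (fun g => exists p, is_Mperm M p g).
split; [split; [|split; [|split]]|split].
- move=> g [p hp]. have [h [hh ih]] := H p. by rewrite (Mperm_uniq hM hp hh).
- by exists 1%g; apply: Mperm_id.
- move=> f g [p hp] [q hq]; exists (q * p)%g; exact: Mperm_comp.
- move=> g [p hp]. have [h [hh _]] := H (p^-1)%g.
  exists h; split; first by exists (p^-1)%g.
  split; apply: (Mperm_uniq hM _ (Mperm_id hM)).
    by rewrite -(mulgV p); apply: Mperm_comp.
  by rewrite -(mulVg p); apply: Mperm_comp.
- move=> p; have [g [hg _]] := H p; exists g; split; first by exists p.
  by case: hg.
- move=> g i [p hp] E a; exact: Mperm_fix hp E.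
Qed.
Lemma tot_same (G : game) (S : gbij G G -> Prop) :
  aut_subgroup S -> strategy_trivial S ->
  forall f f' i a, S f -> S f' -> gpl f i = gpl f' i ->
  tmap f (existT _ i a) = tmap f' (existT _ i a).
Proof.
move=> [_ [_ [Sc Si]]] St f f' i a Sf Sf' E.
have [h [Sh [E1 E2]]] := Si f' Sf'.
have fix1 : gpl (gcomp h f) i = i.
  by rewrite /= E; have := congr1 (fun g => gpl g i) E1.
have T1 := St _ i (Sc _ _ Sh Sf) fix1 a.
have T2 : tmap h (tmap f' (existT _ i a)) = existT _ i a by rewrite -tmap_comp E1 tmap_id.
have T1' : tmap h (tmap f (existT _ i a)) = existT _ i a by rewrite -tmap_comp; exact: T1.
have K : forall y, tmap f' (tmap h y) = y by move=> y; rewrite -tmap_comp E2 tmap_id.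
by rewrite -(K (tmap f _)) T1'.
Qed.

Lemma ex_map (G : game) (S : gbij G G -> Prop) :
  player_transitive S -> forall i k, exists g, S g /\ gpl g i = k.
Proof.
move=> Pt i k; have [g [Sg Hg]] := Pt (tperm i k).
by exists g; split => //; rewrite Hg tpermL.
Qed.

Lemma ii_iii (G : game) :
  (exists S : gbij G G -> Prop,
       aut_subgroup S /\ player_transitive S /\ strategy_trivial S) ->
  (exists M : profile G -> Prop,
       matching M /\
       forall p : {perm player G}, exists g : gbij G G, is_Mperm M p g /\ is_iso g).
Proof.
case=> S [AS [Pt St]].
have AS' := AS; case: AS' => [Siso [Sid [Sc Si]]].
pose inv (s : profile G) := forall g, S g -> forall k,
  tmap g (existT _ k (s k)) = existT (fun j => strat G j : Type) (gpl g k) (s (gpl g k)).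
have uniq : forall s s' i, inv s -> inv s' -> s i = s' i -> s = s'.
  move=> s s' i Is Is' e; apply: functional_extensionality_dep => k.
  have [g [Sg <-]] := ex_map Pt i k.
  apply: (@inj_pair2 _ (fun j => strat G j : Type)); rewrite -Is // -Is' // e //.
have exi : forall i a, exists s, inv s /\ s i = a.
  move=> i a.
  have P : forall k, exists b : strat G k, exists g, S g /\
      tmap g (existT _ i a) = existT (fun j => strat G j : Type) k b.
    move=> k; have [g [Sg e]] := ex_map Pt i k.
    suff : forall j (e : j = k) (c : strat G j), exists b : strat G k,
        existT (fun j => strat G j : Type) j c = existT _ k b.
      by case/(_ _ e (gst g i a)) => b hb; exists b, g.
    by move=> j -> c; exists c.
  pose s : profile G := fun k => proj1_sig (constructive_indefinite_description _ (P k)).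
  have Ps : forall k, exists g, S g /\ tmap g (existT _ i a) = existT _ k (s k).
    by move=> k; exact: (proj2_sig (constructive_indefinite_description _ (P k))).
  exists s; split.
    move=> h Sh k.
    have [g [Sg eg]] := Ps k. have [g' [Sg' eg']] := Ps (gpl h k).
    have gk : gpl g i = k by have := congr1 (@projT1 _ _) eg.
    have g'k : gpl g' i = gpl h k by have := congr1 (@projT1 _ _) eg'.
    rewrite -eg -tmap_comp -eg'; apply: (tot_same AS St _ (Sc _ _ Sh Sg) Sg').
    by rewrite /= gk g'k.
  have [g [Sg eg]] := Ps i.
  have gi : gpl g i = i by have := congr1 (@projT1 _ _) eg.
  apply: (@inj_pair2 _ (fun j => strat G j : Type)); rewrite -eg (tot_same AS St a Sg Sid) ?tmap_id //.
pose M (s : profile G) := inv s.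
exists M; split.
  move=> i a; have [s [Is e]] := exi i a; exists s; split => // s' [Is' e'].
  by apply: (uniq _ _ i) => //; rewrite e e'.
move=> p; have [g [Sg Hg]] := Pt p; exists g; split; last exact: Siso.
split=> // i a.
have [s [Is e]] := exi i a; exists s; split => //; split => //.
apply: (@inj_pair2 _ (fun j => strat G j : Type)); rewrite -e -Is //.
Qed.

Lemma bij_inv (A B : Type) (f : A -> B) : bijective f -> {g | cancel f g /\ cancel g f}.
Proof.
move=> bf; apply: constructive_indefinite_description.
by case: bf => g h1 h2; exists g.
Qed.

Lemma i_iii (G : game) :
  (exists (M' X : finType) (v : M' -> (M' -> X) -> Rdefinitions.R),
       ld_fully_symmetric v /\ isomorphic G (sym_game v)) ->
  (exists M : profile G -> Prop,
       matching M /\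
       forall p : {perm player G}, exists g : gbij G G, is_Mperm M p g /\ is_iso g).
Proof.
case=> M' [X [v [Hsym [phi [[bp bs] Hphi]]]]].
pose php : player G -> M' := gpl phi.
pose phs : forall k, strat G k -> X := gst phi.
have [phpinv [cp1 cp2]] := bij_inv bp.
pose psi : forall k, X -> strat G k := fun k => proj1_sig (bij_inv (bs k)).
have cs1 : forall k, cancel (phs k) (psi k).
  by move=> k; exact: (proj1 (proj2_sig (bij_inv (bs k)))).
have cs2 : forall k, cancel (psi k) (phs k).
  by move=> k; exact: (proj2 (proj2_sig (bij_inv (bs k)))).
exists (fun s => exists x : X, forall k, phs k (s k) = x); split.
  move=> i a; exists (fun k => psi k (phs i a)); split.
    by split; [exists (phs i a) => k; rewrite cs2 | rewrite cs1].
  move=> s' [[x Hx] e]; apply: functional_extensionality_dep => k.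
  by rewrite -e Hx -(Hx k) cs1.
move=> p.
exists (@GBij G G (fun i => p i) (fun i a => psi (p i) (phs i a))); split.
  split=> // i a /=; exists (fun k => psi k (phs i a)); split.
    by exists (phs i a) => k; rewrite cs2.
  by rewrite cs1.
split.
  split; first by exists (p^-1)%g => x /=; rewrite ?permK ?permKV.
  move=> i; exists (fun b => psi i (phs (p i) b)) => b /=; by rewrite ?cs2 ?cs1.
move=> i s t /= Ht.
have sub : forall (w : profile G) k' k, k' = k -> phs k' (w k') = phs k (w k) by move=> w k' k ->.
pose sig := fun m => phs (phpinv m) (s (phpinv m)).
pose tau := fun m => phs (phpinv m) (t (phpinv m)).
have E1 := Hphi i s sig (fun k => sub s _ _ (cp1 k)).
have E2 := Hphi (p i) t tau (fun k => sub t _ _ (cp1 k)).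
rewrite E1 E2 /=.
pose q0 := fun m => php (p (phpinv m)).
have q0inj : injective q0.
  apply: (can_inj (g := fun m => php ((p^-1)%g (phpinv m)))) => m.
  by rewrite /q0 /php cp1 permK cp2.
pose q := perm q0inj.
have := Hsym (php i) q sig; rewrite permE /q0 cp1 => ->.
congr v; apply: functional_extensionality => j.
have qt : forall m, tau (q m) = sig m.
  move=> m; rewrite /tau /sig permE /q0 cp1 Ht cs2 //.
by rewrite -qt permKV.
Qed.

Lemma iii_i (G : game) :
  (exists M : profile G -> Prop,
       matching M /\
       forall p : {perm player G}, exists g : gbij G G, is_Mperm M p g /\ is_iso g) ->
  (exists (M' X : finType) (v : M' -> (M' -> X) -> Rdefinitions.R),
       ld_fully_symmetric v /\ isomorphic G (sym_game v)).
Proof.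
case=> M [hM H].
case: (pickP (fun _ : player G => true)) => [i0 _ | Hn]; last first.
  exists (player G), unit, (fun _ _ => Rdefinitions.R0); split.
    by move=> i; have := Hn i.
  exists (@GBij G (sym_game (fun (_ : player G) (_ : player G -> unit) => Rdefinitions.R0))
            (fun i => i) (fun i _ => tt)).
  split; last by move=> i; have := Hn i.
  split; first by exists id.
  by move=> i; have := Hn i.
have sel : forall j (b : strat G j), {s : profile G | M s /\ s j = b}.
  move=> j b; apply: constructive_indefinite_description.
  by have [s [h _]] := hM j b; exists s.
have uniq : forall s s' j, M s -> M s' -> s j = s' j -> s = s'.
  move=> s s' j Ms Ms' e; have [s0 [_ U]] := hM j (s j).
  by rewrite -(U s (conj Ms erefl)) (U s' (conj Ms' (esym e))).
pose phs : forall k, strat G k -> strat G i0 := fun k b => proj1_sig (sel k b) i0.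
pose psi : forall k, strat G i0 -> strat G k := fun k x => proj1_sig (sel i0 x) k.
have cs1 : forall k, cancel (phs k) (psi k).
  move=> k b; rewrite /psi /phs.
  case: (sel k b) => s [Ms e] /=; case: (sel i0 (s i0)) => s' [Ms' e'] /=.
  by rewrite (uniq s' s i0).
have cs2 : forall k, cancel (psi k) (phs k).
  move=> k x; rewrite /psi /phs.
  case: (sel i0 x) => s [Ms e] /=; case: (sel k (s k)) => s' [Ms' e'] /=.
  by rewrite (uniq s' s k).
pose v := fun (m : player G) (sg : player G -> strat G i0) => payoff G m (fun k => psi k (sg k)).
exists (player G), (strat G i0), v; split.
  move=> i p sg; rewrite /v.
  have [g [[Hp Hr] [_ Hiso]]] := H p.
  rewrite -Hp; apply: Hiso => k /=.
  have -> : (p^-1)%g (gpl g k) = k by rewrite Hp permK.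
  rewrite /psi; case: (sel i0 (sg k)) => r [Mr er] /=.
  exact: (Mrel_fun hM (Hr k (r k)) Mr erefl).
exists (@GBij G (sym_game v) (fun i => i) phs); split.
  split; first by exists id.
  by move=> i; exists (psi i); [exact: cs1 | exact: cs2].
move=> i s t /= Ht; rewrite /v; congr (payoff G i).
by apply: functional_extensionality_dep => k; rewrite Ht cs1.
Qed.

Theorem corollary5p2 (G : game) :
  ((exists (M' X : finType) (v : M' -> (M' -> X) -> Rdefinitions.R),
       ld_fully_symmetric v /\ isomorphic G (sym_game v))
   <->
   (exists S : gbij G G -> Prop,
       aut_subgroup S /\ player_transitive S /\ strategy_trivial S))
  /\
  ((exists S : gbij G G -> Prop,
       aut_subgroup S /\ player_transitive S /\ strategy_trivial S)
   <->
   (exists M : profile G -> Prop,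
       matching M /\
       forall p : {perm player G}, exists g : gbij G G, is_Mperm M p g /\ is_iso g)).
Proof.
split; split.
- by move=> h; apply: iii_ii; apply: i_iii.
- by move=> h; apply: iii_i; apply: ii_iii.
- exact: ii_iii.
- exact: iii_ii.
Qed.
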